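(* Let $\lambda\ge1$ and $\phi=e^{\lambda\psi}$. There exist $h_1=h_1(\lambda)>0$ and $C_\lambda>0$ such that for all $0<h\le h_1$, all $\tau>0$, $0<\delta<1/2$, $\Delta t>0$, and every fully-discrete function $z=(z^{n+1/2})_{n=0}^M$ with $z^{n+1/2}_0=z^{n+1/2}_{N+1}=0$, writing $s=\tau\theta$, $$ \begin{aligned} \tau\lambda^2\iint_Q\bar{\mathtt t}^-(\theta)\phi|\partial_h\bar{\mathtt t}^-z|^2&\ge\tau\lambda^2\iint_Q\bar{\mathtt t}^-(\theta)\phi|\overline{\partial_h\bar{\mathtt t}^-z}|^2+\frac{h^2\tau\lambda^2}{4}\iint_Q\bar{\mathtt t}^-(\theta)\phi|\Delta_h\bar{\mathtt t}^-z|^2\\ &\quad-C_\lambda h^2\iint_Q\bar{\mathtt t}^-(s)|\partial_h\bar{\mathtt t}^-z|^2-C_\lambda\iint_Q\bar{\mathtt t}^-(sh)|\overline{\partial_h\bar{\mathtt t}^-z}|^2-C_\lambda h^4\iint_Q\bar{\mathtt t}^-(s)|\Delta_h\bar{\mathtt t}^-z|^2. \end{aligned} $$ (In the first integral $\phi$ is sampled at the dual points $x_{i+1/2}$, in the others at the primal points $x_i$.)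
   Context: Grids: $\Omega=(0,L)$, $h=L/(N+1)$, $\Delta t=T/M$, $x_i=ih$, $x_{i+1/2}=(i+\frac12)h$, $t_{n\pm1/2}=(n\pm\frac12)\Delta t$. For a primal space function $u$: $(\partial_hu)_{i+1/2}=(u_{i+1}-u_i)/h$ ($i=0,\dots,N$), $\overline{\partial_h u}_i=(u_{i+1}-u_{i-1})/(2h)$ and $(\Delta_hu)_i=(u_{i+1}-2u_i+u_{i-1})/h^2$ ($i=1,\dots,N$). $\int_\Omega$ of a primal function is $\sum_{i=1}^Nh u_i$, of a dual function $\sum_{i=0}^Nhv_{i+1/2}$. For $n=1,\dots,M$, $(\bar{\mathtt t}^-z)^n=z^{n-1/2}$ and $\bar{\mathtt t}^-(f)$ is a continuous $f$ evaluated at $t_{n-1/2}$; $\iint_QF=\sum_{n=1}^M\Delta t\int_\Omega F^n$. Weights: $\psi\in C^k(\overline{\tilde\Omega})$, $k$ large, positive on an open interval $\tilde\Omega\supset[0,L]$; $\theta(t)=1/((t+\delta T)(T+\delta T-t))$. *)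

(* Defs.v *)
From Stdlib Require Import Reals.
From Coquelicot Require Import Coquelicot.
Open Scope R_scope.

Definition Ck_on (k : nat) (a b : R) (f : R -> R) : Prop :=
  (forall n, (n <= k)%nat -> forall x, a < x < b -> ex_derive_n f n x) /\
  (forall x, a < x < b -> continuous (Derive_n f k) x).

(* Space grid: primal points x_i = i h, dual points x_{i+1/2} = (i+1/2) h. *)
Definition xp (h : R) (i : nat) : R := INR i * h.
Definition xd (h : R) (i : nat) : R := (INR i + /2) * h.

(* (partial_h u)_{i+1/2}, stored at index i (i = 0..N) *)
Definition dh (h : R) (u : nat -> R) (i : nat) : R := (u (S i) - u i) / h.
Definition dhc (h : R) (u : nat -> R) (i : nat) : R := (u (S i) - u (i - 1)%nat) / (2 * h).
Definition lap (h : R) (u : nat -> R) (i : nat) : R :=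
  (u (S i) - 2 * u i + u (i - 1)%nat) / (h ^ 2).

Definition pint (h : R) (N : nat) (u : nat -> R) : R := sum_n_m (fun i => h * u i) 1 N.
(* integral over Omega of a dual function (v i = v_{i+1/2}): sum_{i=0}^N h v_{i+1/2} *)
Definition dint (h : R) (N : nat) (v : nat -> R) : R := sum_n_m (fun i => h * v i) 0 N.
(* iint_Q F = sum_{n=1}^M dt (int_Omega F^n) ; here G n is int_Omega F^n *)
Definition tint (dt : R) (M : nat) (G : nat -> R) : R := sum_n_m (fun n => dt * G n) 1 M.

Definition tm (dt : R) (n : nat) : R := (INR n - /2) * dt.

Definition theta (T delta t : R) : R := / ((t + delta * T) * (T + delta * T - t)).

(* Main.v *)
Require Import Defs.
From Stdlib Require Import Reals Lra Lia.
From Coquelicot Require Import Coquelicot.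
Open Scope R_scope.

Lemma isd_eq (f : R -> R) x l l' : is_derive f x l -> l = l' -> is_derive f x l'.
Proof. intros H ->; exact H. Qed.

Lemma scalR (a b : R) : scal a b = a * b.
Proof. reflexivity. Qed.
Lemma multR (a b : R) : mult a b = a * b.
Proof. reflexivity. Qed.
Lemma plusR (a b : R) : plus a b = a + b.
Proof. reflexivity. Qed.

Ltac Req := match goal with |- ?A = ?B => change (@eq R A B) end.

Lemma mvt_ab (f df : R -> R) u v lo hi : lo <= u -> u <= v -> v <= hi ->
  (forall y, lo <= y <= hi -> is_derive f y (df y)) ->
  exists c, u <= c <= v /\ f v - f u = df c * (v - u).
Proof.
  intros H1 H2 H3 Hd.
  destruct (MVT_gen f u v df) as [c [Hc E]].
  - rewrite Rmin_left, Rmax_right by lra. intros y Hy. apply Hd. lra.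
  - rewrite Rmin_left, Rmax_right by lra. intros y Hy. apply continuity_pt_filterlim.
    apply (ex_derive_continuous (K:=R_AbsRing) (V:=R_NormedModule)). eexists; apply Hd; lra.
  - rewrite Rmin_left, Rmax_right in Hc by lra. exists c; split; auto.
Qed.

Lemma analytic (L a b lam : R) (psi : R -> R) : 0 < L -> a < 0 -> L < b ->
  (forall n, (n <= 3)%nat -> forall x, a < x < b -> ex_derive_n psi n x) ->
  exists D, 0 <= D /\ forall x h, 0 <= x -> 0 < h -> x + h <= L ->
    exp (lam * psi (x + h/2)) - (exp (lam * psi x) + exp (lam * psi (x+h)))/2 >= - D * h^2.
Proof.
  intros HL Ha Hb Hd.
  set (phi := fun x => exp (lam * psi x)).
  set (d1 := Derive psi).
  set (d2 := Derive_n psi 2).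
  set (phi1 := fun x => exp (lam * psi x) * (lam * d1 x)).
  set (phi2 := fun x => (exp (lam * psi x) * (lam * d1 x)) * (lam * d1 x) + exp (lam * psi x) * (lam * d2 x)).
  assert (P0 : forall x, a < x < b -> is_derive psi x (d1 x)).
  { intros x Hx. apply Derive_correct. exact (Hd 1%nat ltac:(lia) x Hx). }
  assert (P1 : forall x, a < x < b -> is_derive d1 x (d2 x)).
  { intros x Hx. apply (Derive_correct d1). exact (Hd 2%nat ltac:(lia) x Hx). }
  assert (P2 : forall x, a < x < b -> continuous d2 x).
  { intros x Hx. apply (ex_derive_continuous (K:=R_AbsRing) (V:=R_NormedModule) d2). exact (Hd 3%nat ltac:(lia) x Hx). }
  assert (Q0 : forall x, a < x < b -> is_derive phi x (phi1 x)).
  { intros x Hx. unfold phi, phi1.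
    assert (H := is_derive_comp exp (fun y => lam * psi y) x _ _ (is_derive_exp _)
       (is_derive_scal _ _ lam _ (P0 x Hx))).
    apply (isd_eq _ _ _ _ H). Req. rewrite scalR; ring. }
  assert (Q1 : forall x, a < x < b -> is_derive phi1 x (phi2 x)).
  { intros x Hx. unfold phi1, phi2.
    assert (H := is_derive_mult (fun y => exp (lam * psi y)) (fun y => lam * d1 y) x _ _ (Q0 x Hx)
       (is_derive_scal _ _ lam _ (P1 x Hx)) ltac:(intros; apply Rmult_comm)).
    apply (isd_eq _ _ _ _ H). Req. unfold phi1, plus, mult; simpl. ring. }
  assert (C2 : forall x, a < x < b -> continuity_pt phi2 x).
  { intros x Hx. apply continuity_pt_filterlim.
    assert (c0 : continuous psi x).
    { apply (ex_derive_continuous (K:=R_AbsRing) (V:=R_NormedModule)). eexists; exact (P0 x Hx). }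
    assert (c1 : continuous d1 x).
    { apply (ex_derive_continuous (K:=R_AbsRing) (V:=R_NormedModule)). eexists; exact (P1 x Hx). }
    assert (ce : continuous (fun y => exp (lam * psi y)) x).
    { apply continuous_exp_comp. apply (continuous_scal_r lam psi). exact c0. }
    assert (c2 : continuous (fun y => lam * d1 y) x) by (apply (continuous_scal_r lam d1); exact c1).
    assert (c3 : continuous (fun y => lam * d2 y) x) by (apply (continuous_scal_r lam d2); exact (P2 x Hx)).
    change (continuous phi2 x). unfold phi2.
    apply (continuous_plus (fun y => exp (lam * psi y) * (lam * d1 y) * (lam * d1 y))
                           (fun y => exp (lam * psi y) * (lam * d2 y)));
    repeat (apply (continuous_mult (K:=R_AbsRing)); auto). }
  destruct (continuity_ab_maj (fun y => Rabs (phi2 y)) 0 L ltac:(lra)) as [Mx [HM HMx]].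
  { intros c Hc. apply (continuity_pt_comp phi2 Rabs). apply C2; lra. apply Rcontinuity_abs. }
  exists (Rabs (phi2 Mx) / 4). split. { apply Rmult_le_pos. apply Rabs_pos. lra. }
  intros x h Hx Hh Hxh.
  assert (Q0' : forall y, 0 <= y <= L -> is_derive phi y (phi1 y)) by (intros; apply Q0; lra).
  assert (Q1' : forall y, 0 <= y <= L -> is_derive phi1 y (phi2 y)) by (intros; apply Q1; lra).
  destruct (mvt_ab phi phi1 x (x + h/2) 0 L) as [c1 [Hc1 E1]]; try lra; auto.
  destruct (mvt_ab phi phi1 (x + h/2) (x+h) 0 L) as [c2 [Hc2 E2]]; try lra; auto.
  destruct (mvt_ab phi1 phi2 c1 c2 0 L) as [c3 [Hc3 E3]]; try lra; auto.
  assert (B : Rabs (phi2 c3) <= Rabs (phi2 Mx)) by (apply HM; lra).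
  change (phi (x + h/2) - (phi x + phi (x+h))/2 >= - (Rabs (phi2 Mx) / 4) * h^2).
  assert (E : phi (x + h/2) - (phi x + phi (x+h))/2 = - (h/4) * (phi2 c3 * (c2 - c1))).
  { replace (phi (x + h/2) - (phi x + phi (x+h))/2) with
      (((phi (x + h/2) - phi x) - (phi (x+h) - phi (x+h/2)))/2) by field.
    rewrite E1, E2. replace (x + h/2 - x) with (h/2) by ring.
    replace (x + h - (x + h/2)) with (h/2) by lra.
    replace (phi1 c1 * (h / 2) - phi1 c2 * (h / 2)) with (- (h/2) * (phi1 c2 - phi1 c1)) by ring.
    rewrite E3. field. }
  rewrite E.
  assert (P : phi2 c3 * (c2 - c1) <= Rabs (phi2 Mx) * h).
  { apply Rle_trans with (Rabs (phi2 c3) * (c2 - c1)).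
    apply Rmult_le_compat_r. lra. apply Rle_abs.
    apply Rmult_le_compat; try lra. apply Rabs_pos. }
  nra.
Qed.

Lemma sR_plus (u v : nat -> R) n m : sum_n_m (fun k => u k + v k) n m = sum_n_m u n m + sum_n_m v n m.
Proof. exact (sum_n_m_plus u v n m). Qed.
Lemma sR_mult c (u : nat -> R) n m : sum_n_m (fun k => c * u k) n m = c * sum_n_m u n m.
Proof. exact (sum_n_m_mult_l c u n m). Qed.

Lemma lin2 c1 c2 (f g : nat -> R) n m :
  c1 * sum_n_m f n m + c2 * sum_n_m g n m = sum_n_m (fun k => c1 * f k + c2 * g k) n m.
Proof. rewrite sR_plus, !sR_mult. reflexivity. Qed.

Lemma lin4 c1 c2 c3 c4 (f1 f2 f3 f4 : nat -> R) n m :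
  c1 * sum_n_m f1 n m + c2 * sum_n_m f2 n m + c3 * sum_n_m f3 n m + c4 * sum_n_m f4 n m
  = sum_n_m (fun k => c1 * f1 k + c2 * f2 k + c3 * f3 k + c4 * f4 k) n m.
Proof. rewrite !sR_plus, !sR_mult. reflexivity. Qed.

Lemma sum_nonneg (f : nat -> R) n m : (forall k, (n <= k <= m)%nat -> 0 <= f k) -> 0 <= sum_n_m f n m.
Proof.
  revert n. induction m; intros n H.
  - destruct n. rewrite sum_n_n; apply H; lia. rewrite sum_n_m_zero by lia; apply Rle_refl.
  - destruct (Compare_dec.le_lt_dec n (S m)).
    + rewrite sum_n_Sm by lia. unfold plus; simpl.
      assert (0 <= sum_n_m f n m) by (apply IHm; intros; apply H; lia).
      assert (0 <= f (S m)) by (apply H; lia). lra.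
    + rewrite sum_n_m_zero by lia; apply Rle_refl.
Qed.

Lemma keysum_aux (X Y P Q : nat -> R) N : 0 <= P 0%nat ->
  (forall i, (1 <= i <= N)%nat -> Y i <= P i + Q (i-1)%nat) ->
  (forall i, (i <= N)%nat -> P i + Q i <= X i) ->
  sum_n_m Y 1 N + Q N <= sum_n_m X 0 N.
Proof.
  intros H0. induction N; intros H1 H2.
  - rewrite sum_n_m_zero by lia. rewrite sum_n_n. unfold zero; simpl. specialize (H2 0%nat ltac:(lia)). lra.
  - rewrite (sum_n_Sm Y 1 N) by lia. rewrite (sum_n_Sm X 0 N) by lia. unfold plus; simpl.
    assert (IH : sum_n_m Y 1 N + Q N <= sum_n_m X 0 N).
    { apply IHN; intros; [apply H1 | apply H2]; lia. }
    assert (A := H1 (S N) ltac:(lia)). replace (S N - 1)%nat with N in A by lia.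
    assert (B := H2 (S N) ltac:(lia)). lra.
Qed.

Lemma keysum (X Y P Q : nat -> R) N : 0 <= P 0%nat -> 0 <= Q N ->
  (forall i, (1 <= i <= N)%nat -> Y i <= P i + Q (i-1)%nat) ->
  (forall i, (i <= N)%nat -> P i + Q i <= X i) ->
  sum_n_m Y 1 N <= sum_n_m X 0 N.
Proof. intros Ha Hb Hc Hd. assert (H := keysum_aux X Y P Q N Ha Hc Hd). lra. Qed.

Lemma theta_pos T delta M n : 0 < T -> 0 < delta -> (0 < M)%nat -> (1 <= n <= M)%nat ->
  0 < theta T delta (tm (T / INR M) n).
Proof.
  intros HT Hd HM Hn. unfold theta, tm.
  assert (Hm : 0 < INR M) by (apply lt_0_INR; lia).
  assert (H1 : 1 <= INR n) by (change 1 with (INR 1); apply le_INR; lia).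
  assert (H2 : INR n <= INR M) by (apply le_INR; lia).
  set (t := (INR n - / 2) * (T / INR M)).
  assert (Ht : t * INR M = T * (INR n - /2)) by (unfold t; field; lra).
  assert (0 < t) by nra. assert (t < T) by nra.
  apply Rinv_0_lt_compat. apply Rmult_lt_0_compat; nra.
Qed.

Lemma spatial (h D lam tau th : R) (N : nat) (psi : R -> R) (w : nat -> R) :
  0 < h -> 0 <= D -> 0 < tau -> 0 <= th ->
  (forall i, (i <= N)%nat -> exp (lam * psi (xd h i)) - (exp (lam * psi (xp h i)) + exp (lam * psi (xp h (S i))))/2 >= - D * h^2) ->
  tau * lam^2 * dint h N (fun i => th * exp (lam * psi (xd h i)) * (dh h w i)^2)
  + (lam^2 * (D+1)) * h^2 * dint h N (fun i => tau * th * (dh h w i)^2)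
  >= tau * lam^2 * pint h N (fun i => th * exp (lam * psi (xp h i)) * (dhc h w i)^2)
  + h^2 * tau * lam^2 / 4 * pint h N (fun i => th * exp (lam * psi (xp h i)) * (lap h w i)^2).
Proof.
  intros Hh HD Ht Hth Hphi. unfold dint, pint.
  rewrite !lin2.
  apply Rle_ge.
  set (c := tau * lam^2 * th * h).
  assert (Hc : 0 <= c) by (unfold c; apply Rmult_le_pos; [apply Rmult_le_pos|lra]; [apply Rmult_le_pos|]; nra).
  apply (keysum _ _ (fun i => c * exp (lam * psi (xp h i)) * (dh h w i)^2 / 2)
                    (fun i => c * exp (lam * psi (xp h (S i))) * (dh h w i)^2 / 2)).
  - cbv beta. assert (0 < exp (lam * psi (xp h 0))) by apply exp_pos. assert (0 <= dh h w 0 ^2) by nra.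
    apply Rmult_le_pos; [|lra]. apply Rmult_le_pos; [|lra]. apply Rmult_le_pos; lra.
  - cbv beta. assert (0 < exp (lam * psi (xp h (S N)))) by apply exp_pos. assert (0 <= dh h w N ^2) by nra.
    apply Rmult_le_pos; [|lra]. apply Rmult_le_pos; [|lra]. apply Rmult_le_pos; lra.
  - intros i Hi. simpl. replace (S (i-1)) with i by lia. unfold c, dh, dhc, lap.
    replace (S (i - 1)) with i by lia. right. field. lra.
  - intros i Hi. simpl. specialize (Hphi i Hi).
    set (e := exp (lam * psi (xd h i)) - (exp (lam * psi (xp h i)) + exp (lam * psi (xp h (S i))))/2 + (D+1) * h^2).
    assert (He : 0 <= e) by (unfold e; nra).
    assert (Hd : 0 <= dh h w i ^2) by nra.
    assert (0 <= c * dh h w i ^2 * e) by (apply Rmult_le_pos; [apply Rmult_le_pos|]; auto).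
    assert (E : tau * lam ^ 2 * (h * (th * exp (lam * psi (xd h i)) * dh h w i ^ 2)) +
       lam ^ 2 * (D + 1) * h ^ 2 * (h * (tau * th * dh h w i ^ 2))
       - (c * exp (lam * psi (xp h i)) * dh h w i ^ 2 / 2 + c * exp (lam * psi (xp h (S i))) * dh h w i ^ 2 / 2)
       = c * dh h w i ^2 * e) by (unfold c, e; field).
    lra.
Qed.

Theorem lemma2 :
  exists K : nat, forall k : nat, (K <= k)%nat ->
  forall (L T : R), 0 < L -> 0 < T ->
  forall (a b : R) (psi : R -> R), a < 0 -> L < b ->
    Ck_on k a b psi -> (forall x, a < x < b -> 0 < psi x) ->
  forall lam : R, 1 <= lam ->
  exists h1 C : R, 0 < h1 /\ 0 < C /\
  forall (N M : nat) (tau delta : R) (z : nat -> nat -> R),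
    let h := L / (INR N + 1) in
    let dt := T / INR M in
    let phi := fun x => exp (lam * psi x) in
    let th := fun n => theta T delta (tm dt n) in
    h <= h1 -> 0 < tau -> 0 < delta < /2 -> (0 < M)%nat ->
    (forall n, (n <= M)%nat -> z n 0%nat = 0 /\ z n (S N) = 0) ->
    tau * lam ^ 2 *
      tint dt M (fun n => dint h N (fun i =>
        th n * phi (xd h i) * (dh h (z (n - 1)%nat) i) ^ 2))
    >=
    tau * lam ^ 2 *
      tint dt M (fun n => pint h N (fun i =>
        th n * phi (xp h i) * (dhc h (z (n - 1)%nat) i) ^ 2))
    + h ^ 2 * tau * lam ^ 2 / 4 *
      tint dt M (fun n => pint h N (fun i =>
        th n * phi (xp h i) * (lap h (z (n - 1)%nat) i) ^ 2))
    - C * h ^ 2 *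
      tint dt M (fun n => dint h N (fun i =>
        tau * th n * (dh h (z (n - 1)%nat) i) ^ 2))
    - C *
      tint dt M (fun n => pint h N (fun i =>
        tau * th n * h * (dhc h (z (n - 1)%nat) i) ^ 2))
    - C * h ^ 4 *
      tint dt M (fun n => pint h N (fun i =>
        tau * th n * (lap h (z (n - 1)%nat) i) ^ 2)).
Proof.
  exists 3%nat. intros k Hk L T HL HT a b psi Ha Hb [Hck _] _ lam Hlam.
  destruct (analytic L a b lam psi HL Ha Hb (fun n Hn => Hck n (Nat.le_trans _ _ _ Hn Hk)))
    as [D [HD HDp]].
  exists 1, (lam^2 * (D+1)). split; [lra|split; [nra|]].
  intros N M tau delta z h dt phi th Hh1 Htau Hdel HM Hz.
  assert (HN : 0 < INR N + 1) by (pose proof (pos_INR N); lra).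
  assert (Hh : 0 < h) by (unfold h; apply Rdiv_lt_0_compat; lra).
  assert (HhL : (INR N + 1) * h = L) by (unfold h; field; lra).
  assert (Hdt : 0 < dt) by (unfold dt; apply Rdiv_lt_0_compat; [lra| apply lt_0_INR; lia]).
  assert (Hth : forall n, (1 <= n <= M)%nat -> 0 < th n).
  { intros n Hn. unfold th, dt. apply theta_pos; auto; lra. }
  assert (Hphi : forall i, (i <= N)%nat -> exp (lam * psi (xd h i)) - (exp (lam * psi (xp h i)) + exp (lam * psi (xp h (S i))))/2 >= - D * h^2).
  { intros i Hi.
    assert (E1 : xd h i = xp h i + h/2) by (unfold xd, xp; field).
    assert (E2 : xp h (S i) = xp h i + h) by (unfold xp; rewrite S_INR; ring).
    rewrite E1, E2. apply HDp; auto.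
    - unfold xp. apply Rmult_le_pos; [apply pos_INR|lra].
    - unfold xp. assert (INR i <= INR N) by (apply le_INR; lia). nra. }
  unfold tint.
  set (A := fun n => dint h N (fun i => th n * phi (xd h i) * (dh h (z (n - 1)%nat) i) ^ 2)).
  set (B := fun n => pint h N (fun i => th n * phi (xp h i) * (dhc h (z (n - 1)%nat) i) ^ 2)).
  set (Lp := fun n => pint h N (fun i => th n * phi (xp h i) * (lap h (z (n - 1)%nat) i) ^ 2)).
  set (E := fun n => dint h N (fun i => tau * th n * (dh h (z (n - 1)%nat) i) ^ 2)).
  set (F := fun n => pint h N (fun i => tau * th n * h * (dhc h (z (n - 1)%nat) i) ^ 2)).
  set (G := fun n => pint h N (fun i => tau * th n * (lap h (z (n - 1)%nat) i) ^ 2)).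
  assert (S1 : 0 <= tau * lam^2 * sum_n_m (fun n => dt * A n) 1 M
                 + (lam^2 * (D+1) * h^2) * sum_n_m (fun n => dt * E n) 1 M
                 + (- (tau * lam^2)) * sum_n_m (fun n => dt * B n) 1 M
                 + (- (h ^ 2 * tau * lam ^ 2 / 4)) * sum_n_m (fun n => dt * Lp n) 1 M).
  { rewrite lin4. apply sum_nonneg. intros n Hn.
    assert (Sp := spatial h D lam tau (th n) N psi (z (n-1)%nat) Hh HD Htau
                   (Rlt_le _ _ (Hth n Hn)) Hphi).
        assert (0 <= dt * (tau * lam ^ 2 * A n + lam ^ 2 * (D + 1) * h ^ 2 * E n
              - tau * lam ^ 2 * B n - h ^ 2 * tau * lam ^ 2 / 4 * Lp n)).
    { apply Rmult_le_pos; [lra|]. unfold A, B, Lp, E, phi. cbv beta. lra. }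
    lra. }
  assert (SF : 0 <= sum_n_m (fun n => dt * F n) 1 M).
  { apply sum_nonneg. intros n Hn. apply Rmult_le_pos; [lra|]. unfold F, pint.
    apply sum_nonneg. intros i Hi. specialize (Hth n Hn).
    apply Rmult_le_pos; [lra|]. apply Rmult_le_pos; [|apply pow2_ge_0].
    apply Rmult_le_pos; [apply Rmult_le_pos|]; lra. }
  assert (SG : 0 <= sum_n_m (fun n => dt * G n) 1 M).
  { apply sum_nonneg. intros n Hn. apply Rmult_le_pos; [lra|]. unfold G, pint.
    apply sum_nonneg. intros i Hi. specialize (Hth n Hn).
    apply Rmult_le_pos; [lra|]. apply Rmult_le_pos; [|apply pow2_ge_0]. apply Rmult_le_pos; lra. }
  assert (0 <= lam^2 * (D+1)) by nra.
  assert (0 <= lam^2 * (D+1) * sum_n_m (fun n => dt * F n) 1 M) by (apply Rmult_le_pos; lra).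
  assert (0 <= lam^2 * (D+1) * h^4 * sum_n_m (fun n => dt * G n) 1 M).
  { apply Rmult_le_pos; [|lra]. apply Rmult_le_pos; [lra|]. apply pow_le; lra. }
  unfold A, B, Lp, E, F, G in *. cbv beta in *. lra.
Qed.
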